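(* Suppose that Assumptions (A1)–(A4) hold. Then there is a constant $C>0$ depending only on $\alpha$, $\gamma$, the constants in (A1) and (A2), and $\|V\|_{C^2}$ (independent of $\epsilon\in(0,1]$) such that for every solution $(u,m)$ of Problem 1, each of the functions $u$, $u_x$, $m$, $m_x$ has $L^\infty(\mathbb{T})$-norm at most $C/\sqrt{\epsilon}$ and satisfies $|w(x)-w(y)|\le \frac{C}{\sqrt\epsilon}|x-y|^{1/2}$ for all $x,y\in\mathbb{T}$ (where $|x-y|$ is the distance on $\mathbb{T}$). The same holds, with the same constant, if $V$ is replaced by $\lambda V$ for any $\lambda\in[0,1]$.
   Context: Let $\mathbb{T}=\mathbb{R}/\mathbb{Z}$ be the one-dimensional torus; functions on $\mathbb{T}$ are identified with $1$-periodic functions on $\mathbb{R}$. Let $H:\mathbb{R}\to\mathbb{R}$ be of class $C^2$, $V:\mathbb{T}\to\mathbb{R}$ continuous, $\alpha>0$, and $0<\epsilon\le 1$. We say $(u,m)$ solves Problem 1 if $u,m\in C^2(\mathbb{T})$, $m>0$ on $\mathbb{T}$, and on $\mathbb{T}$: $$u-u_{xx}+H(u_x)+V(x)=m^\alpha+\epsilon(m-m_{xx}),\qquad m-m_{xx}-(H'(u_x)m)_x=1-\epsilon(u-u_{xx}).$$ Assumptions: (A1) there exist constants $C_1,C_2,C_3>0$ and $\gamma>1$ such that $-C_1+C_2|p|^\gamma\le H(p)\le C_1+C_3|p|^\gamma$ for all $p\in\mathbb{R}$. (A2) There exist constants $\tilde C_1,\tilde C_2,\tilde C_3>0$ such that $-\tilde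 C_1+\tilde C_2|p|^\gamma\le pH'(p)-H(p)\le \tilde C_1+\tilde C_3|p|^\gamma$ for all $p$ (same $\gamma$ as in (A1)). (A3) $V$ is of class $C^2$. (A4) $H$ is convex. *)

(* Defs.v *)
From Stdlib Require Export Reals Lra.
Open Scope R_scope.

(* |p|^g with the convention 0^g = 0 (g > 0); Stdlib's Rpower 0 g = 1. *)
Definition absPow (p g : R) : R :=
  if Req_EM_T p 0 then 0 else Rpower (Rabs p) g.

(* 1-periodic function on R, i.e. a function on T = R/Z. *)
Definition periodic1 (f : R -> R) : Prop := forall x, f (x + 1) = f x.

Definition C2_with (f f1 f2 : R -> R) : Prop :=
  (forall x, derivable_pt_lim f x (f1 x)) /\
  (forall x, derivable_pt_lim f1 x (f2 x)) /\
  continuity f2.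

Definition distT (x y : R) : R :=
  Rmin (frac_part (x - y)) (1 - frac_part (x - y)).

(* The divergence term (H'(u_x) m)_x is expressed by
   requiring x |-> H1 (u1 x) * m x to have the prescribed derivative. *)
Definition Problem1 (H H1 W : R -> R) (alpha eps : R)
  (u u1 u2 m m1 m2 : R -> R) : Prop :=
  periodic1 u /\ periodic1 m /\
  C2_with u u1 u2 /\ C2_with m m1 m2 /\
  (forall x, 0 < m x) /\
  (forall x, u x - u2 x + H (u1 x) + W x
             = Rpower (m x) alpha + eps * (m x - m2 x)) /\
  (forall x, derivable_pt_lim (fun y => H1 (u1 y) * m y) x
             (m x - m2 x - 1 + eps * (u x - u2 x))).

(* Main.v *)
Require Import Defs.
From Stdlib Require Import Reals.
From Stdlib Require Import Reals Lra Lia ZArith FunctionalExtensionality.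
From Coquelicot Require Import Coquelicot.
Open Scope R_scope.
Notation dl := derivable_pt_lim.

Lemma antideriv (g : R -> R) : continuity g ->
  exists P : R -> R, forall x, derivable_pt_lim P x (g x).
Proof.
intros Hg. exists (fun x => RInt g 0 x). intros x.
apply is_derive_Reals. apply (is_derive_RInt g (RInt g 0) 0 x).
- apply filter_forall. intros b. apply (RInt_correct g 0 b).
  apply ex_RInt_continuous. intros z _. apply continuity_pt_filterlim. apply Hg.
- apply continuity_pt_filterlim. apply Hg.
Qed.

Lemma mono_le (k k' : R -> R) (a b : R) : a <= b ->
  (forall x, derivable_pt_lim k x (k' x)) ->
  (forall x, a <= x <= b -> k' x <= 0) -> k b <= k a.
Proof.
intros Hab Hd Hs. destruct (Req_dec a b) as [->|Hne]; [lra|].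
destruct (MVT_cor2 k k' a b) as [c [Hc1 Hc2]]; [lra|intros; apply Hd|].
assert (k' c <= 0) by (apply Hs; lra). nra.
Qed.

Lemma deriv_unique_shift (f f' : R -> R) :
  (forall x, f (x + 1) = f x) ->
  (forall x, derivable_pt_lim f x (f' x)) -> forall x, f' (x + 1) = f' x.
Proof.
intros Hp Hd x.
assert (H1 : derivable_pt_lim (fun y => f (y + 1)) x (f' (x+1) * 1)).
{ apply (derivable_pt_lim_comp (fun y => y + 1) f x 1 (f' (x+1))).
  - replace 1 with (1 + 0) at 1 by lra. apply derivable_pt_lim_plus.
    apply derivable_pt_lim_id. apply derivable_pt_lim_const.
  - apply Hd. }
assert (H2 : derivable_pt_lim (fun y => f (y + 1)) x (f' x)).
{ assert (E : (fun y => f (y+1)) = f) by (apply functional_extensionality; intros; apply Hp).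
  rewrite E. apply Hd. }
pose proof (uniqueness_limite _ _ _ _ H1 H2). lra.
Qed.

Lemma periodic_nat (f : R -> R) : (forall x, f (x + 1) = f x) ->
  forall n x, f (x + INR n) = f x.
Proof.
intros Hp n; induction n as [|n IH]; intros x.
- simpl. rewrite Rplus_0_r. reflexivity.
- rewrite S_INR. replace (x + (INR n + 1)) with ((x + INR n) + 1) by ring.
  rewrite Hp. apply IH.
Qed.

Lemma periodic_Z (f : R -> R) : (forall x, f (x + 1) = f x) ->
  forall n x, f (x + IZR n) = f x.
Proof.
intros Hp n x. destruct (Z_le_gt_dec 0 n) as [Hn|Hn].
- rewrite <- (Z2Nat.id n Hn). rewrite <- INR_IZR_INZ. apply periodic_nat; auto.
- assert (E : IZR n = - INR (Z.to_nat (- n))).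
  { rewrite INR_IZR_INZ. rewrite Z2Nat.id by lia. rewrite opp_IZR. ring. }
  rewrite E. rewrite <- (periodic_nat f Hp (Z.to_nat (-n)) (x + - _)).
  f_equal. ring.
Qed.
Lemma D_ext f x l l' : dl f x l -> l = l' -> dl f x l'.
Proof. intros H ->; exact H. Qed.
Lemma D_plus f g x a b : dl f x a -> dl g x b -> dl (fun y => f y + g y) x (a + b).
Proof. intros; exact (derivable_pt_lim_plus f g x a b H H0). Qed.
Lemma D_minus f g x a b : dl f x a -> dl g x b -> dl (fun y => f y - g y) x (a - b).
Proof. intros; exact (derivable_pt_lim_minus f g x a b H H0). Qed.
Lemma D_mult f g x a b : dl f x a -> dl g x b -> dl (fun y => f y * g y) x (a * g x + f x * b).
Proof. intros; exact (derivable_pt_lim_mult f g x a b H H0). Qed.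
Lemma D_const c x : dl (fun _ => c) x 0.
Proof. exact (derivable_pt_lim_const c x). Qed.
Lemma D_id x : dl (fun y => y) x 1.
Proof. exact (derivable_pt_lim_id x). Qed.
Lemma D_comp f g x a b : dl f x a -> dl g (f x) b -> dl (fun y => g (f y)) x (b * a).
Proof. intros; exact (derivable_pt_lim_comp f g x a b H H0). Qed.
Ltac dleaf := match goal with H : forall x, dl ?f x _ |- dl ?f _ _ => apply H end.
Ltac dauto := repeat first [ dleaf | apply D_minus | apply D_plus | apply D_mult | apply D_const | apply D_id ].


Lemma seg_half (w w' Q : R -> R) (a b S t : R) :
  (forall x, dl w x (w' x)) -> (forall x, dl Q x (w' x * w' x)) ->
  a <= b -> Q b - Q a <= S -> 0 < t ->
  w b - w a <= S / (2*t) + t * (b - a) / 2.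
Proof.
intros Hw HQ Hab HS Ht.
assert (K := mono_le (fun y => w y - / (2*t) * Q y - (t/2) * y)
  (fun y => w' y - / (2*t) * (w' y * w' y) - t/2) a b Hab).
assert (Hi : 0 < / (2*t)) by (apply Rinv_0_lt_compat; lra).
cbv beta in K.
assert (w b - / (2 * t) * Q b - t / 2 * b <= w a - / (2 * t) * Q a - t / 2 * a).
{ apply K.
  - intros x. eapply D_ext. dauto. cbv beta. ring.
  - intros x _. 
    assert (E : w' x - / (2 * t) * (w' x * w' x) - t / 2 = - (/ (2*t) * ((w' x - t) * (w' x - t)))).
    { field. lra. }
    rewrite E. assert (0 <= / (2*t) * ((w' x - t) * (w' x - t))) by (apply Rmult_le_pos; [lra | apply Rle_0_sqr]). lra. }
assert (E2 : S / (2*t) = / (2*t) * S) by (unfold Rdiv; ring).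
rewrite E2. nra.
Qed.

Lemma seg (w w' Q : R -> R) (a b S : R) :
  (forall x, dl w x (w' x)) -> (forall x, dl Q x (w' x * w' x)) ->
  a <= b -> Q b - Q a <= S -> 0 < S ->
  Rabs (w b - w a) <= sqrt S * sqrt (b - a).
Proof.
intros Hw HQ Hab HS HS0.
destruct (Req_dec a b) as [->|Hne].
{ replace (b - b) with 0 by ring. rewrite Rminus_diag, Rabs_R0, sqrt_0. lra. }
set (s := sqrt S). set (d := sqrt (b - a)).
assert (Hs : 0 < s) by (apply sqrt_lt_R0; lra).
assert (Hd : 0 < d) by (apply sqrt_lt_R0; lra).
assert (Es : s * s = S) by (apply sqrt_sqrt; lra).
assert (Ed : d * d = b - a) by (apply sqrt_sqrt; lra).
assert (Ht : 0 < s / d) by (apply Rdiv_lt_0_compat; lra).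
assert (H1 := seg_half w w' Q a b S (s/d) Hw HQ Hab HS Ht).
assert (Hn : forall x, dl (fun y => - w y) x (- w' x)).
{ intros x. exact (derivable_pt_lim_opp w x (w' x) (Hw x)). }
assert (HQ' : forall x, dl Q x ((- w' x) * (- w' x))).
{ intros x. eapply D_ext. apply HQ. ring. }
assert (H2 := seg_half (fun y => - w y) (fun y => - w' y) Q a b S (s/d) Hn HQ' Hab HS Ht).
cbv beta in H2.
assert (E : S / (2 * (s/d)) + s / d * (b - a) / 2 = s * d).
{ rewrite <- Es, <- Ed. field. lra. }
rewrite E in H1, H2. apply Rabs_le. lra.
Qed.

Lemma shift_deriv (Q q : R -> R) x : (forall x, dl Q x (q x)) ->
  dl (fun y => Q (y + 1)) x (q (x + 1)).
Proof.
intros HQ. eapply D_ext. apply (D_comp (fun y => y + 1) Q x 1).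
eapply D_ext. apply D_plus. apply D_id. apply D_const. ring. apply HQ. ring.
Qed.

Lemma sqrt2_le : sqrt 2 <= 2.
Proof.
assert (H := sqrt_sqrt 2 ltac:(lra)). assert (0 <= sqrt 2) by apply sqrt_pos. nra.
Qed.

Lemma frac_decomp r : r = frac_part r + IZR (Int_part r).
Proof. unfold frac_part. ring. Qed.

Lemma oneD (w w' P Q : R -> R) (A : R) :
  (forall x, w (x + 1) = w x) -> (forall x, w' (x + 1) = w' x) ->
  (forall x, dl w x (w' x)) -> (forall x, dl P x (w x * w x)) ->
  (forall x, dl Q x (w' x * w' x)) ->
  P 1 - P 0 <= A -> Q 1 - Q 0 <= A -> 0 < A ->
  (forall x, Rabs (w x) <= 3 * sqrt A) /\
  (forall x y, Rabs (w x - w y) <= 3 * sqrt A * sqrt (Rmin (frac_part (x - y)) (1 - frac_part (x - y)))).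
Proof.
intros Hpw Hpw' Hw HP HQ HPA HQA HA.
assert (Qmono : forall a b, a <= b -> Q a <= Q b).
{ intros a b Hab.
  assert (K := mono_le (fun y => - Q y) (fun y => - (w' y * w' y)) a b Hab).
  cbv beta in K. enough (- Q b <= - Q a) by lra. apply K.
  - intros x. exact (derivable_pt_lim_opp Q x _ (HQ x)).
  - intros x _. assert (0 <= w' x * w' x) by apply Rle_0_sqr. lra. }
assert (Q21 : Q 2 - Q 1 = Q 1 - Q 0).
{ assert (Hk : forall x, dl (fun y => Q (y + 1) - Q y) x (w' (x+1) * w' (x+1) - w' x * w' x)).
  { intros x. apply D_minus. apply (shift_deriv Q (fun y => w' y * w' y)). apply HQ. apply HQ. }
  assert (K1 := mono_le _ _ 0 1 ltac:(lra) Hk).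
  assert (Hk' : forall x, dl (fun y => - (Q (y + 1) - Q y)) x (- (w' (x+1) * w' (x+1) - w' x * w' x))).
  { intros x. exact (derivable_pt_lim_opp _ x _ (Hk x)). }
  assert (K2 := mono_le _ _ 0 1 ltac:(lra) Hk').
  cbv beta in K1, K2.
  replace (0+1) with 1 in * by ring. replace (1+1) with 2 in * by ring.
  assert (Q 2 - Q 1 <= Q 1 - Q 0).
  { apply K1. intros x _. rewrite Hpw'. lra. }
  assert (- (Q 2 - Q 1) <= - (Q 1 - Q 0)).
  { apply K2. intros x _. rewrite Hpw'. lra. }
  lra. }
set (r := sqrt 2 * sqrt A).
assert (Hr : r = sqrt (2 * A)) by (unfold r; rewrite sqrt_mult; lra).
assert (Hsa : 0 <= sqrt A) by apply sqrt_pos.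
assert (Hr3 : r <= 2 * sqrt A) by (unfold r; pose proof sqrt2_le; nra).
assert (Hr0 : 0 <= r) by (rewrite Hr; apply sqrt_pos).
assert (H4 : forall a b, 0 <= a <= 2 -> 0 <= b <= 2 -> a <= b ->
   Rabs (w b - w a) <= r * sqrt (b - a)).
{ intros a b Ha Hb Hab. rewrite Hr. apply (seg w w' Q); auto; [|lra].
  assert (Q a >= Q 0) by (apply Rle_ge, Qmono; lra).
  assert (Q b <= Q 2) by (apply Qmono; lra). lra. }
split.
- intros x. rewrite (frac_decomp x), (periodic_Z w Hpw).
  set (x' := frac_part x). assert (Hx := base_fp x). fold x' in Hx.
  set (c := Rabs (w x')).
  assert (Hc : forall y, 0 <= y <= 1 -> Rabs (w x' - w y) <= r).
  { intros y Hy. destruct (Rle_dec x' y) as [Hl|Hl].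
    - rewrite Rabs_minus_sym. eapply Rle_trans. apply H4; lra.
      assert (sqrt (y - x') <= 1).
      { rewrite <- sqrt_1. apply sqrt_le_1_alt. lra. } nra.
    - eapply Rle_trans. apply H4; lra.
      assert (sqrt (x' - y) <= 1).
      { rewrite <- sqrt_1. apply sqrt_le_1_alt. lra. } nra. }
  destruct (Rle_dec c r) as [Hcr|Hcr]; [lra|].
  set (dd := c - r).
  assert (Hy : forall y, 0 <= y <= 1 -> dd * dd <= w y * w y).
  { intros y Hy. specialize (Hc y Hy).
    assert (dd <= Rabs (w y)).
    { unfold dd, c. pose proof (Rabs_triang_inv (w x') (w y)). lra. }
    assert (Rabs (w y) * Rabs (w y) = w y * w y).
    { rewrite <- Rabs_mult. apply Rabs_pos_eq. apply Rle_0_sqr. }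
    assert (0 < dd) by (unfold dd; lra). nra. }
  assert (K := mono_le (fun y => dd * dd * y - P y) (fun y => dd * dd - w y * w y) 0 1 ltac:(lra)).
  cbv beta in K.
  assert (dd * dd * 1 - P 1 <= dd * dd * 0 - P 0).
  { apply K. intros x0. eapply D_ext. dauto. cbv beta. ring.
    intros x0 H0. specialize (Hy x0 H0). lra. }
  assert (dd * dd <= A) by lra.
  assert (Hsq : sqrt A * sqrt A = A) by (apply sqrt_sqrt; lra).
  assert (dd <= sqrt A) by nra.
  unfold dd in *. lra.
- intros x y.
  set (f := frac_part (x - y)). set (a := frac_part y).
  assert (Hf := base_fp (x - y)). assert (Ha := base_fp y). fold f in Hf. fold a in Ha.
  assert (Ex : x = a + f + IZR (Int_part y + Int_part (x - y))).
  { rewrite plus_IZR. unfold a, f, frac_part. ring. }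
  assert (Ey : y = a + IZR (Int_part y)).
  { unfold a, frac_part. ring. }
  assert (Hwx : w x = w (a + f)) by (rewrite Ex; apply periodic_Z; auto).
  assert (Hwy : w y = w a) by (rewrite Ey at 1; apply periodic_Z; auto).
  rewrite Hwx, Hwy.
  assert (Hsd : forall d, 0 <= sqrt d) by (intros; apply sqrt_pos).
  destruct (Rle_dec f (1 - f)) as [Hl|Hl].
  + rewrite Rmin_left by lra.
    eapply Rle_trans. apply H4; lra. replace (a + f - a) with f by ring.
    specialize (Hsd f). assert (0 <= (3*sqrt A - r) * sqrt f) by (apply Rmult_le_pos; lra). nra.
  + rewrite Rmin_right by lra. rewrite <- (Hpw a). rewrite Rabs_minus_sym.
    eapply Rle_trans. apply H4; lra. replace (a + 1 - (a + f)) with (1 - f) by ring.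
    specialize (Hsd (1 - f)). assert (0 <= (3*sqrt A - r) * sqrt (1 - f)) by (apply Rmult_le_pos; lra). nra.
Qed.

Lemma convex_d2 (H H1 H2 : R -> R) :
  (forall x, dl H x (H1 x)) -> (forall x, dl H1 x (H2 x)) -> continuity H2 ->
  (forall x y t, 0 <= t <= 1 -> H (t * x + (1 - t) * y) <= t * H x + (1 - t) * H y) ->
  forall x, 0 <= H2 x.
Proof.
intros HH HH1 Hc Hcv x.
destruct (Rle_dec 0 (H2 x)) as [|Hn]; [assumption|exfalso].
assert (Hn' : H2 x < 0) by lra.
destruct (Hc x (- H2 x / 2) ltac:(lra)) as [del [Hdel Hd]].
assert (Hneg : forall z, Rabs (z - x) < del -> H2 z < 0).
{ intros z Hz. destruct (Req_dec z x) as [->|Hzx]; [lra|].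
  assert (R_dist (H2 z) (H2 x) < - H2 x / 2).
  { apply Hd. split. split. exact I. auto. exact Hz. }
  unfold R_dist in H0. apply Rabs_def2 in H0. lra. }
set (h := del / 2).
assert (Hh : 0 < h) by (unfold h; lra).
set (g := fun s => H (x + s) + H (x - s) - 2 * H x).
set (g1 := fun s => H1 (x + s) - H1 (x - s)).
set (g2 := fun s => H2 (x + s) + H2 (x - s)).
assert (Dp : forall (F F' : R -> R), (forall y, dl F y (F' y)) -> forall s, dl (fun s => F (x + s)) s (F' (x + s))).
{ intros F F' HF s. eapply D_ext. apply (D_comp (fun s => x + s) F s 1).
  eapply D_ext. apply D_plus. apply D_const. apply D_id. ring. apply HF. ring. }
assert (Dm : forall (F F' : R -> R), (forall y, dl F y (F' y)) -> forall s, dl (fun s => F (x - s)) s (- F' (x - s))).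
{ intros F F' HF s. eapply D_ext. apply (D_comp (fun s => x - s) F s (-1)).
  eapply D_ext. apply D_minus. apply D_const. apply D_id. ring. apply HF. ring. }
assert (Dg : forall s, dl g s (g1 s)).
{ intros s. unfold g, g1. eapply D_ext. apply D_minus. apply D_plus.
  apply (Dp H H1 HH). apply (Dm H H1 HH). apply D_const. ring. }
assert (Dg1 : forall s, dl g1 s (g2 s)).
{ intros s. unfold g1, g2. eapply D_ext. apply D_minus.
  apply (Dp H1 H2 HH1). apply (Dm H1 H2 HH1). ring. }
destruct (MVT_cor2 g g1 0 h Hh (fun c _ => Dg c)) as [c [Ec Hc0]].
destruct (MVT_cor2 g1 g2 0 c ltac:(lra) (fun c _ => Dg1 c)) as [c' [Ec' Hc0']].
assert (g2 c' < 0).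
{ unfold g2. assert (Rabs (x + c' - x) < del) by (rewrite Rabs_right; unfold h in *; lra).
  assert (Rabs (x - c' - x) < del) by (rewrite Rabs_left; unfold h in *; lra).
  pose proof (Hneg _ H0). pose proof (Hneg _ H3). lra. }
assert (g1 0 = 0) by (unfold g1; rewrite Rplus_0_r, Rminus_0_r; ring).
assert (g 0 = 0) by (unfold g; rewrite Rplus_0_r, Rminus_0_r; ring).
assert (g1 c < 0) by nra.
assert (Hgh : g h < 0) by nra.
assert (Hconv := Hcv (x + h) (x - h) (1/2) ltac:(lra)).
replace (1/2 * (x + h) + (1 - 1/2) * (x - h)) with x in Hconv by field.
unfold g in Hgh. lra.
Qed.

Lemma Rpower_pos a b : 0 < Rpower a b.
Proof. unfold Rpower. apply exp_pos. Qed.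

Lemma power_bound (alpha K : R) : 0 < alpha -> 0 <= K ->
  forall m, 0 < m ->
  K * m + Rpower m alpha - Rpower m alpha * m <=
  K * Rmax 2 (Rpower (2*K+1) (1/alpha)) + Rpower (Rmax 2 (Rpower (2*K+1) (1/alpha))) alpha.
Proof.
intros Ha HK m Hm.
set (M := Rmax 2 (Rpower (2*K+1) (1/alpha))).
assert (HM2 : 2 <= M) by apply Rmax_l.
assert (HMp : Rpower (2*K+1) (1/alpha) <= M) by apply Rmax_r.
assert (HPM := Rpower_pos M alpha).
assert (HPm := Rpower_pos m alpha).
destruct (Rle_dec m M) as [Hle|Hgt].
- assert (Rpower m alpha <= Rpower M alpha) by (apply Rle_Rpower_l; lra).
  assert (K * m <= K * M) by (apply Rmult_le_compat_l; lra).
  assert (0 <= Rpower m alpha * m) by nra. lra.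
- assert (Hge : 2*K+1 <= Rpower m alpha).
  { replace (2*K+1) with (Rpower (Rpower (2*K+1) (1/alpha)) alpha).
    apply Rle_Rpower_l. lra. split. apply Rpower_pos. lra.
    rewrite Rpower_mult. replace (1/alpha*alpha) with 1 by (field; lra).
    apply Rpower_1. lra. }
  assert (0 <= K * M) by nra. nra.
Qed.

Lemma absPow_nonneg p g : 0 <= absPow p g.
Proof. unfold absPow. destruct (Req_EM_T p 0). lra. left; apply Rpower_pos. Qed.

Lemma dl_cont (f f' : R -> R) : (forall x, dl f x (f' x)) -> continuity f.
Proof. intros Hf x. apply (derivable_continuous_pt f x (exist _ (f' x) (Hf x))). Qed.

Lemma cont_sq (f : R -> R) : continuity f -> continuity (fun x => f x * f x).
Proof. intros Hf x. apply (continuity_pt_mult f f x (Hf x) (Hf x)). Qed.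

Lemma incr_sq (P f : R -> R) : (forall x, dl P x (f x * f x)) -> P 0 <= P 1.
Proof.
intros HP. assert (K := mono_le (fun y => - P y) (fun y => - (f y * f y)) 0 1 ltac:(lra)).
cbv beta in K. enough (- P 1 <= - P 0) by lra. apply K.
- intros x. exact (derivable_pt_lim_opp P x _ (HP x)).
- intros x _. assert (0 <= f x * f x) by apply Rle_0_sqr. lra.
Qed.
Lemma alg (eps u u1 u2 m m1 m2 Hp H1p H2p W W1 W2 Ma Ma' : R) :
  let LHS := eps * (u*u + 2*(u1*u1) + u2*u2 + m*m + 2*(m1*m1) + m2*m2) in
  let E2v := m - m2 - 1 + eps * (u - u2) in
  let G' := E2v*u + (H1p*m)*u1 - (H1p*u2*m1 + Hp*m2) + (W2*m + W1*m1) - (W1*m1 + W*m2)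
      - eps*m2 + (Ma'*m1 + Ma*m2) + 2*eps*(u1*u1 + u*u2 + m1*m1 + m*m2) in
  let RR := m*(Hp - u1*H1p) - H2p*(u2*u2)*m + (W - W2)*m + Ma + eps*m - Hp - W - Ma*m - Ma'*m1 in
  let e1 := u - u2 + Hp + W - Ma - eps*(m - m2) in
  let e2 := H2p*u2*m + H1p*m1 - E2v in
  LHS - G' - RR = (1 - (m - m2)) * e1 + u2 * e2.
Proof. intros. unfold LHS, G', RR, e1, e2, E2v. ring. Qed.

Theorem mainTheorem6 :
  forall (alpha gamma C1 C2 C3 D1 D2 D3 B : R),
    0 < alpha -> 1 < gamma ->
    0 < C1 -> 0 < C2 -> 0 < C3 -> 0 < D1 -> 0 < D2 -> 0 < D3 ->
    0 <= B ->
  exists C : R, 0 < C /\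
  forall (H H1 H2 V V1 V2 : R -> R),
    (* H is C^2 *)
    C2_with H H1 H2 ->
    (* (A1) *)
    (forall p, - C1 + C2 * absPow p gamma <= H p <= C1 + C3 * absPow p gamma) ->
    (* (A2) *)
    (forall p, - D1 + D2 * absPow p gamma <= p * H1 p - H p
               <= D1 + D3 * absPow p gamma) ->
    (* (A3): V is C^2 on T, with ||V||_{C^2} <= B *)
    periodic1 V -> C2_with V V1 V2 ->
    (forall x, Rabs (V x) <= B) -> (forall x, Rabs (V1 x) <= B) ->
    (forall x, Rabs (V2 x) <= B) ->
    (* (A4) *)
    (forall x y t, 0 <= t <= 1 ->
       H (t * x + (1 - t) * y) <= t * H x + (1 - t) * H y) ->
  forall (eps lambda : R), 0 < eps <= 1 -> 0 <= lambda <= 1 ->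
  forall (u u1 u2 m m1 m2 : R -> R),
    Problem1 H H1 (fun x => lambda * V x) alpha eps u u1 u2 m m1 m2 ->
    forall w, (w = u \/ w = u1 \/ w = m \/ w = m1) ->
      (forall x, Rabs (w x) <= C / sqrt eps) /\
      (forall x y, Rabs (w x - w y) <= C / sqrt eps * sqrt (distT x y)).
Proof.
intros alpha gamma C1 C2 C3 D1 D2 D3 B Ha Hg HC1 HC2 HC3 HD1 HD2 HD3 HB.
set (K := D1 + 2*B + 1).
set (M := Rmax 2 (Rpower (2*K+1) (1/alpha))).
set (K0 := K * M + Rpower M alpha).
set (Cn := K0 + C1 + B).
assert (HK0 : 0 <= K0).
{ unfold K0. assert (2 <= M) by apply Rmax_l. pose proof (Rpower_pos M alpha).
  assert (0 <= K) by (unfold K; lra). nra. }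
assert (HCn : 0 < Cn) by (unfold Cn; lra).
exists (3 * sqrt Cn). split.
{ assert (0 < sqrt Cn) by (apply sqrt_lt_R0; lra). lra. }
intros H H1 H2 V V1 V2 [HH [HH1 HH2c]] A1 A2 Vp [HV [HV1 HV2c]] Vb V1b V2b Hcv
  eps lambda Heps Hlam u u1 u2 m m1 m2 Prob w Hw.
destruct Prob as [up [mp [[Hu [Hu1 Hu2c]] [[Hm [Hm1 Hm2c]] [mpos [E1 E2]]]]]].
unfold periodic1 in *.
assert (u1p := deriv_unique_shift u u1 up Hu).
assert (u2p := deriv_unique_shift u1 u2 u1p Hu1).
assert (m1p := deriv_unique_shift m m1 mp Hm).
assert (m2p := deriv_unique_shift m1 m2 m1p Hm1).
assert (V1p := deriv_unique_shift V V1 Vp HV).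
assert (H2pos := convex_d2 H H1 H2 HH HH1 HH2c Hcv).
assert (Ech : forall x, H2 (u1 x) * u2 x * m x + H1 (u1 x) * m1 x
                       = m x - m2 x - 1 + eps * (u x - u2 x)).
{ intros x. apply (uniqueness_limite (fun y => H1 (u1 y) * m y) x); [|apply E2].
  eapply D_ext. apply D_mult. apply (D_comp u1 H1). apply Hu1. apply HH1. apply Hm.
  cbv beta. ring. }
assert (dHu : forall x, dl (fun y => H (u1 y)) x (H1 (u1 x) * u2 x)).
{ intros x. apply (D_comp u1 H). apply Hu1. apply HH. }
assert (dW : forall x, dl (fun y => lambda * V y) x (lambda * V1 x)).
{ intros x. eapply D_ext. apply D_mult. apply D_const. apply HV. cbv beta. ring. }
assert (dW1 : forall x, dl (fun y => lambda * V1 y) x (lambda * V2 x)).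
{ intros x. eapply D_ext. apply D_mult. apply D_const. apply HV1. cbv beta. ring. }
assert (dMa : forall x, dl (fun y => Rpower (m y) alpha) x
                   (alpha * Rpower (m x) (alpha - 1) * m1 x)).
{ intros x. apply (D_comp m (fun z => Rpower z alpha)). apply Hm.
  apply derivable_pt_lim_power. apply mpos. }
assert (cu := dl_cont u u1 Hu). assert (cu1 := dl_cont u1 u2 Hu1).
assert (cm := dl_cont m m1 Hm). assert (cm1 := dl_cont m1 m2 Hm1).
destruct (antideriv _ (cont_sq u cu)) as [Pu HPu].
destruct (antideriv _ (cont_sq u1 cu1)) as [Pu1 HPu1].
destruct (antideriv _ (cont_sq u2 Hu2c)) as [Pu2 HPu2].
destruct (antideriv _ (cont_sq m cm)) as [Pm HPm].
destruct (antideriv _ (cont_sq m1 cm1)) as [Pm1 HPm1].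
destruct (antideriv _ (cont_sq m2 Hm2c)) as [Pm2 HPm2].
set (G := fun y => H1 (u1 y) * m y * u y - H (u1 y) * m1 y + lambda * V1 y * m y
   - lambda * V y * m1 y - eps * m1 y + Rpower (m y) alpha * m1 y
   + 2 * eps * (u y * u1 y + m y * m1 y)).
assert (Gp : G 1 = G 0).
{ unfold G. replace 1 with (0 + 1) by ring.
  rewrite up, u1p, mp, m1p, Vp, V1p. reflexivity. }
set (Gd := fun x => (m x - m2 x - 1 + eps * (u x - u2 x)) * u x + (H1 (u1 x) * m x) * u1 x
   - (H1 (u1 x) * u2 x * m1 x + H (u1 x) * m2 x)
   + (lambda * V2 x * m x + lambda * V1 x * m1 x) - (lambda * V1 x * m1 x + lambda * V x * m2 x)
   - eps * m2 x + (alpha * Rpower (m x) (alpha - 1) * m1 x * m1 x + Rpower (m x) alpha * m2 x)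
   + 2 * eps * (u1 x * u1 x + u x * u2 x + m1 x * m1 x + m x * m2 x)).
assert (dG : forall x, dl G x (Gd x)).
{ intros x. unfold G, Gd. eapply D_ext. dauto. cbv beta. ring. }
set (F := fun y => eps * (Pu y + 2 * Pu1 y + Pu2 y + Pm y + 2 * Pm1 y + Pm2 y)).
set (LHS := fun x => eps * (u x * u x + 2 * (u1 x * u1 x) + u2 x * u2 x + m x * m x
     + 2 * (m1 x * m1 x) + m2 x * m2 x)).
assert (dF : forall x, dl F x (LHS x)).
{ intros x. unfold F, LHS. eapply D_ext. dauto. cbv beta. ring. }
assert (Pt : forall x, LHS x - Gd x - Cn <= 0).
{ intros x.
  assert (Ealg := alg eps (u x) (u1 x) (u2 x) (m x) (m1 x) (m2 x) (H (u1 x)) (H1 (u1 x))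
     (H2 (u1 x)) (lambda * V x) (lambda * V1 x) (lambda * V2 x) (Rpower (m x) alpha)
     (alpha * Rpower (m x) (alpha - 1) * m1 x)).
  cbv zeta in Ealg.
  assert (e1 : u x - u2 x + H (u1 x) + lambda * V x - Rpower (m x) alpha - eps * (m x - m2 x) = 0)
    by (rewrite E1; ring).
  assert (e2 : H2 (u1 x) * u2 x * m x + H1 (u1 x) * m1 x - (m x - m2 x - 1 + eps * (u x - u2 x)) = 0)
    by (rewrite Ech; ring).
  rewrite e1, e2 in Ealg.
  assert (Eq : LHS x - Gd x =
     m x * (H (u1 x) - u1 x * H1 (u1 x)) - H2 (u1 x) * (u2 x * u2 x) * m x
     + (lambda * V x - lambda * V2 x) * m x + Rpower (m x) alpha + eps * m x - H (u1 x)
     - lambda * V x - Rpower (m x) alpha * m x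
     - alpha * Rpower (m x) (alpha - 1) * m1 x * m1 x).
  { unfold LHS, Gd. lra. }
  rewrite Eq. clear Eq Ealg.
  pose proof (mpos x) as mx.
  pose proof (A2 (u1 x)) as A2x. pose proof (absPow_nonneg (u1 x) gamma).
  pose proof (A1 (u1 x)) as A1x. pose proof (absPow_nonneg (u1 x) gamma).
  assert (T1 : m x * (H (u1 x) - u1 x * H1 (u1 x)) <= m x * D1).
  { apply Rmult_le_compat_l. lra. nra. }
  assert (T2 : 0 <= H2 (u1 x) * (u2 x * u2 x) * m x).
  { pose proof (H2pos (u1 x)). pose proof (Rle_0_sqr (u2 x)). unfold Rsqr in *.
    apply Rmult_le_pos; [apply Rmult_le_pos|]; lra. }
  assert (Lb : forall z, Rabs z <= B -> Rabs (lambda * z) <= B).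
  { intros z Hz. rewrite Rabs_mult, (Rabs_pos_eq lambda) by lra.
    pose proof (Rabs_pos z). nra. }
  pose proof (Lb _ (Vb x)) as LV. pose proof (Lb _ (V2b x)) as LV2.
  apply Rabs_le_between in LV, LV2.
  assert (T3 : (lambda * V x - lambda * V2 x) * m x <= 2 * B * m x).
  { apply Rmult_le_compat_r; lra. }
  assert (T4 : eps * m x <= m x) by nra.
  assert (T5 : 0 <= alpha * Rpower (m x) (alpha - 1) * m1 x * m1 x).
  { pose proof (Rpower_pos (m x) (alpha - 1)). pose proof (Rle_0_sqr (m1 x)). unfold Rsqr in *.
    replace (alpha * Rpower (m x) (alpha - 1) * m1 x * m1 x) with
      ((alpha * Rpower (m x) (alpha - 1)) * (m1 x * m1 x)) by ring.
    apply Rmult_le_pos; [|lra]. apply Rmult_le_pos; lra. }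
  assert (T6 := power_bound alpha K Ha ltac:(unfold K; lra) (m x) mx).
  fold M in T6. fold K0 in T6.
  assert (T7 : 0 <= C2 * absPow (u1 x) gamma) by nra.
  unfold Cn, K in *. lra. }
assert (Fb : F 1 - F 0 <= Cn).
{ assert (Kk := mono_le (fun y => F y - G y - Cn * y) (fun y => LHS y - Gd y - Cn) 0 1 ltac:(lra)).
  cbv beta in Kk.
  assert (F 1 - G 1 - Cn * 1 <= F 0 - G 0 - Cn * 0).
  { apply Kk. intros x. eapply D_ext. apply D_minus. apply D_minus. apply dF. apply dG.
    apply D_mult. apply D_const. apply D_id. cbv beta. ring. intros x _. apply Pt. }
  lra. }
assert (i1 := incr_sq Pu u HPu). assert (i2 := incr_sq Pu1 u1 HPu1).
assert (i3 := incr_sq Pu2 u2 HPu2). assert (i4 := incr_sq Pm m HPm).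
assert (i5 := incr_sq Pm1 m1 HPm1). assert (i6 := incr_sq Pm2 m2 HPm2).
set (A := Cn / eps).
assert (HA : 0 < A) by (unfold A; apply Rdiv_lt_0_compat; lra).
assert (bnd : forall d, 0 <= d -> eps * d <= Cn -> d <= A).
{ intros d Hd Hed. unfold A. apply Rmult_le_reg_l with eps. lra.
  field_simplify; lra. }
unfold F in Fb.
assert (bu : Pu 1 - Pu 0 <= A) by (apply bnd; nra).
assert (bu1 : Pu1 1 - Pu1 0 <= A) by (apply bnd; nra).
assert (bu2 : Pu2 1 - Pu2 0 <= A) by (apply bnd; nra).
assert (bm : Pm 1 - Pm 0 <= A) by (apply bnd; nra).
assert (bm1 : Pm1 1 - Pm1 0 <= A) by (apply bnd; nra).
assert (bm2 : Pm2 1 - Pm2 0 <= A) by (apply bnd; nra).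
assert (EC : 3 * sqrt A = 3 * sqrt Cn / sqrt eps).
{ unfold A. rewrite sqrt_div_alt by lra. field.
  assert (0 < sqrt eps) by (apply sqrt_lt_R0; lra). lra. }
rewrite <- EC. unfold distT.
destruct Hw as [ -> | [ -> | [ -> | -> ] ] ].
- apply (oneD u u1 Pu Pu1 A); auto.
- apply (oneD u1 u2 Pu1 Pu2 A); auto.
- apply (oneD m m1 Pm Pm1 A); auto.
- apply (oneD m1 m2 Pm1 Pm2 A); auto.
Qed.
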